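(* Let $\mathcal{H}=\mathbb{C}^{d_1}\otimes\cdots\otimes\mathbb{C}^{d_N}$ with all $d_i\ge2$ and $G=SL(d_1,\mathbb{C})\times\cdots\times SL(d_N,\mathbb{C})$ acting on $\mathcal{H}$ by $g_1\otimes\cdots\otimes g_N$ and on $\mathbb{P}(\mathcal{H})$ by $g[\psi]=[g|\psi\rangle]$. For every semistable $|\Psi\rangle\in\mathcal{H}$, $\dim G|\Psi\rangle=\dim G[\Psi]$.
   Context: Orbits are complex submanifolds with $\dim G|\Psi\rangle=\dim G-\dim G_{|\Psi\rangle}$ and $\dim G[\Psi]=\dim G-\dim G_{[\Psi]}$, where $G_{|\Psi\rangle}=\{g: g|\Psi\rangle=|\Psi\rangle\}$ and $G_{[\Psi]}=\{g: g|\Psi\rangle\propto|\Psi\rangle\}$. A vector $|\Psi\rangle$ is semistable if $0\notin\overline{G|\Psi\rangle}$ (closure in the standard topology). *)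

(* Defs.v *)
From HB Require Import structures.
From mathcomp Require Import all_boot all_order all_algebra.
From mathcomp Require Import boolp reals.
From mathcomp Require Import complex.

Set Implicit Arguments.
Unset Strict Implicit.
Unset Printing Implicit Defensive.

Import Order.TTheory GRing.Theory Num.Theory.
Local Open Scope ring_scope.
Local Open Scope complex_scope.

(* Multi-indices (j_1,...,j_N) with j_i < d_i : basis of C^{d_1} (x) ... (x) C^{d_N}. *)
Definition midx (N : nat) (d : 'I_N -> nat) : finType :=
  {dffun forall i : 'I_N, 'I_(d i)}.

(* A vector |Psi> of H = C^{d_1} (x) ... (x) C^{d_N}, given by its coordinates
   in the product basis. *)
Definition tensor (R : realType) (N : nat) (d : 'I_N -> nat) : Type :=
  midx d -> R[i].

Definition mxtuple (R : realType) (N : nat) (d : 'I_N -> nat) : Type :=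
  forall i : 'I_N, 'M[R[i]]_(d i).

Definition mxtuple1 (R : realType) (N : nat) (d : 'I_N -> nat) : mxtuple R d :=
  fun i => 1%:M.

Definition inG (R : realType) (N : nat) (d : 'I_N -> nat) (g : mxtuple R d) : Prop :=
  forall i, \det (g i) = 1.

(* The action (g_1 (x) ... (x) g_N) |Psi>, in coordinates. *)
Definition act (R : realType) (N : nat) (d : 'I_N -> nat)
    (g : mxtuple R d) (psi : tensor R d) : tensor R d :=
  fun j => \sum_(k : midx d) (\prod_(i < N) g i (j i) (k i)) * psi k.

Definition stab_vec (R : realType) (N : nat) (d : 'I_N -> nat)
    (psi : tensor R d) (g : mxtuple R d) : Prop :=
  inG g /\ act g psi = psi.

Definition stab_ray (R : realType) (N : nat) (d : 'I_N -> nat)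
    (psi : tensor R d) (g : mxtuple R d) : Prop :=
  inG g /\ exists c : R[i], forall j, act g psi j = c * psi j.

(* Tangent vectors at the identity of a subset S of the group:
   X = gamma'(0) for a curve gamma : C -> S with gamma(0) = 1, complex
   differentiable at 0 (derivative written out entrywise, epsilon-delta). *)
Definition tangent_at_1 (R : realType) (N : nat) (d : 'I_N -> nat)
    (S : mxtuple R d -> Prop) (X : mxtuple R d) : Prop :=
  exists gamma : R[i] -> mxtuple R d,
    (forall z, S (gamma z)) /\ gamma 0 = mxtuple1 R d /\
    forall eps : R, 0 < eps -> exists delta : R, 0 < delta /\
      forall z : R[i], z != 0 -> `|z| < delta%:C ->
        forall (i : 'I_N) (a b : 'I_(d i)),
          `|(gamma z i a b - mxtuple1 R d i a b) / z - X i a b| < eps%:C.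

Definition lin_indep (R : realType) (N : nat) (d : 'I_N -> nat) (k : nat)
    (Xs : 'I_k -> mxtuple R d) : Prop :=
  forall c : 'I_k -> R[i],
    (forall (i : 'I_N) (a b : 'I_(d i)), \sum_(l < k) c l * Xs l i a b = 0) ->
    forall l, c l = 0.

Definition has_indep (R : realType) (N : nat) (d : 'I_N -> nat)
    (T : mxtuple R d -> Prop) (k : nat) : Prop :=
  exists Xs : 'I_k -> mxtuple R d, (forall l, T (Xs l)) /\ lin_indep Xs.

(* Complex dimension of (the span of) a set T of matrix tuples: the largest
   number of C-linearly independent elements of T (bounded by the ambient
   dimension sum_i d_i^2). *)
Definition dimC (R : realType) (N : nat) (d : 'I_N -> nat)
    (T : mxtuple R d -> Prop) : nat :=
  (\max_(k < (\sum_(i < N) d i ^ 2).+1 | `[< has_indep T k >]) k)%N.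

(* Dimension of a (closed) subgroup H of G: dimension of its tangent space
   (Lie algebra) at the identity. *)
Definition subgroup_dim (R : realType) (N : nat) (d : 'I_N -> nat)
    (H : mxtuple R d -> Prop) : nat :=
  dimC (tangent_at_1 H).

Definition dimG (N : nat) (d : 'I_N -> nat) : nat := (\sum_(i < N) (d i ^ 2 - 1))%N.

Definition orbit_dim_vec (R : realType) (N : nat) (d : 'I_N -> nat)
    (psi : tensor R d) : nat :=
  (dimG d - subgroup_dim (stab_vec psi))%N.

Definition orbit_dim_ray (R : realType) (N : nat) (d : 'I_N -> nat)
    (psi : tensor R d) : nat :=
  (dimG d - subgroup_dim (stab_ray psi))%N.

(* Semistability: 0 is not in the closure (standard topology of H = C^D) of
   the orbit G|Psi>, i.e. some ball around 0 (sup-norm) misses the orbit. *)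
Definition semistable (R : realType) (N : nat) (d : 'I_N -> nat)
    (psi : tensor R d) : Prop :=
  exists eps : R, 0 < eps /\
    forall g : mxtuple R d, inG g -> exists j, eps%:C <= `|act g psi j|.

(* Main.v *)
Require Import Defs.
From HB Require Import structures.
From mathcomp Require Import all_boot all_order all_algebra.
From mathcomp Require Import boolp classical_sets reals.
From mathcomp Require Import complex.
From mathcomp Require Import ring lra.
From mathcomp Require Import fingroup perm.
Set Implicit Arguments.
Unset Strict Implicit.
Unset Printing Implicit Defensive.
Import Order.TTheory GRing.Theory Num.Theory.

Module Mod_A.
Local Open Scope ring_scope.

Lemma prod_sum_dep (T : comPzSemiRingType) (N : nat) (d : 'I_N -> nat)
  (F : forall i : 'I_N, 'I_(d i) -> T) :
  \prod_(i < N) \sum_(b < d i) F i b = \sum_(k : midx d) \prod_(i < N) F i (k i).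
Proof.
pose P_ := fun i => [ffun b => F i b].
transitivity (\prod_(i < N) \sum_(j in tagged_with (fun i => 'I_(d i)) i) untag 0 (P_ i) j).
  apply: eq_bigr => i _.
  rewrite -(big_tag (fun i b => P_ i b)); apply: eq_bigr => j _.
  by rewrite /P_ ffunE.
rewrite bigA_distr_big_dep.
rewrite -big_fprod.
rewrite /midx (reindex (@dffun_of_fprod _ (fun i => 'I_(d i)))); last first.
  exact/onW_bij/dffun_of_fprod_bij.
apply: eq_bigr => t _; apply: eq_bigr => i _.
by rewrite /P_ !ffunE.
Qed.

End Mod_A.
Import Mod_A.

Module Mod_B.
Local Open Scope ring_scope.

Definition tmul (R : realType) (N : nat) (d : 'I_N -> nat) (g h : mxtuple R d) : mxtuple R d :=
  fun i => g i *m h i.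

Lemma act_mul (R : realType) (N : nat) (d : 'I_N -> nat) (g h : mxtuple R d) (v : tensor R d) :
  act g (act h v) = act (tmul g h) v.
Proof.
apply: funext => j; rewrite /act.
under eq_bigr do rewrite big_distrr /=.
rewrite exchange_big /=; apply: eq_bigr => l _.
under eq_bigr do rewrite mulrA.
rewrite -big_distrl /=; congr (_ * _).
rewrite /tmul.
under [RHS]eq_bigr do rewrite mxE.
rewrite prod_sum_dep; apply: eq_bigr => k _.
by rewrite -big_split.
Qed.

Lemma act1 (R : realType) (N : nat) (d : 'I_N -> nat) (v : tensor R d) :
  act (mxtuple1 R d) v = v.
Proof.
apply: funext => j; rewrite /act (bigD1 j) //=.
rewrite [X in _ + X]big1 ?addr0.
  by rewrite big1 ?mul1r // => i _; rewrite /mxtuple1 mxE eqxx.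
move=> k /negbTE kj.
have [i ij] : exists i, j i != k i.
  apply/existsP; apply: contraFT kj => /existsPn H.
  by apply/eqP/ffunP => i; move: (H i); rewrite negbK => /eqP.
by rewrite (bigD1 i) //= /mxtuple1 mxE (negbTE ij) mul0r mul0r.
Qed.

Lemma actZ (R : realType) (N : nat) (d : 'I_N -> nat) (g : mxtuple R d) c (v : tensor R d) :
  act g (fun j => c * v j) = fun j => c * act g v j.
Proof.
apply: funext => j; rewrite /act big_distrr; apply: eq_bigr => k _.
by rewrite mulrCA.
Qed.

Lemma actB (R : realType) (N : nat) (d : 'I_N -> nat) (g : mxtuple R d) (u v : tensor R d) :
  act g (fun j => u j - v j) = fun j => act g u j - act g v j.
Proof.
apply: funext => j; rewrite /act -sumrB; apply: eq_bigr => k _.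
by rewrite mulrBr.
Qed.

End Mod_B.
Import Mod_B.

Module Mod_C.
Local Open Scope ring_scope.

Lemma bernoulli (R : realType) (h : R) (n : nat) : -1 <= h -> 1 + n%:R * h <= (1 + h) ^+ n.
Proof.
move=> h1; elim: n => [|n IH]; first by rewrite expr0 mul0r addr0.
rewrite exprS -natr1.
have h0 : 0 <= 1 + h by lra.
have := ler_wpM2l h0 IH.
have : 0 <= n%:R * h ^+ 2 by rewrite mulr_ge0 ?sqr_ge0.
nra.
Qed.

Lemma pow_small (R : realType) (r e : R) : 0 <= r -> r < 1 -> 0 < e -> exists n, r ^+ n < e.
Proof.
move=> r0 r1 e0.
have [->|rn0] := eqVneq r 0; first by exists 1%N; rewrite expr1.
have rp : 0 < r by rewrite lt_def rn0.
set h := r^-1 - 1.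
have hp : 0 < h by rewrite /h subr_gt0 invf_gt1.
have b0 : 0 <= (e * h)^-1 by rewrite invr_ge0 mulr_ge0 // ltW.
set n := Num.bound (e * h)^-1.
exists n.
have hm := archi_boundP b0; rewrite -/n in hm.
have := @bernoulli R h n (ltW (lt_le_trans (ltrN10 R) (ltW hp))).
rewrite /h [1 + (r^-1 - 1)]addrC subrK exprVn => hb.
have qp : 0 < r ^+ n by rewrite exprn_gt0.
have q1 : r ^+ n * (r ^+ n)^-1 = 1 by rewrite mulfV // gt_eqF.
have ehp : 0 < e * h by rewrite mulr_gt0.
have e1 : (e * h) * (e * h)^-1 = 1 by rewrite mulfV // gt_eqF.
move: hb hm q1 e1 qp ehp hp e0; rewrite -/h.
set q := r ^+ n; set qi := q^-1; set a := (e * h)^-1; set nn := n%:R.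
move=> hb hm q1 e1 qp ehp hp e0.
have h1 : 1 < nn * h * e.
  have : a * (e * h) < nn * (e * h) by rewrite ltr_pM2r.
  rewrite mulrC e1 => H; apply: (lt_le_trans H); rewrite !mulrA; lra.
have h2 : 1 < qi * e.
  have : nn * h * e <= qi * e by rewrite ler_pM2r //; lra.
  lra.
have : q * 1 < q * (qi * e) by rewrite ltr_pM2l.
rewrite mulrA q1; lra.
Qed.

End Mod_C.
Import Mod_C.

Module Mod_D.
Local Open Scope ring_scope.
Local Open Scope complex_scope.

Definition nc (R : realType) (x : R[i]) : R := complex.Re `|x|.

Section NC.
Context (R : realType).
Implicit Types x y : R[i].

Lemma ncE x : `|x| = (nc x)%:C.
Proof.
rewrite /nc; have := ger0_Im (normr_ge0 x).
by case: `|x| => a b /= ->.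
Qed.

Lemma ncdef x : nc x = Num.sqrt ((complex.Re x)^+2 + (complex.Im x)^+2).
Proof. by rewrite /nc normc_def. Qed.

Lemma nc_ge0 x : 0 <= nc x.
Proof. by rewrite -lecR -ncE normr_ge0. Qed.

Lemma ncD x y : nc (x + y) <= nc x + nc y.
Proof. by rewrite -lecR rmorphD /= -!ncE ler_normD. Qed.

Lemma ncM x y : nc (x * y) = nc x * nc y.
Proof. by apply: complexI; rewrite rmorphM /= -!ncE normrM. Qed.

Lemma ncN x : nc (- x) = nc x.
Proof. by rewrite /nc normrN. Qed.

Lemma ncB x y : nc (x - y) = nc (y - x).
Proof. by rewrite -ncN opprB. Qed.

Lemma nc_eq0 x : (nc x == 0) = (x == 0).
Proof.
apply/eqP/eqP => [h|->]; last by rewrite /nc normr0.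
by apply/normr0_eq0; rewrite ncE h.
Qed.

Lemma ncV x : nc x^-1 = (nc x)^-1.
Proof. by apply: complexI; rewrite fmorphV /= -!ncE normfV. Qed.

Lemma ncR (r : R) : nc r%:C = `|r|.
Proof. by rewrite ncdef /= expr0n addr0 sqrtr_sqr. Qed.

Lemma nc1 : nc (1 : R[i]) = 1.
Proof. by rewrite -[1 : R[i]]/(1%:C) ncR normr1. Qed.

Lemma nc0 : nc (0 : R[i]) = 0.
Proof. by apply/eqP; rewrite nc_eq0. Qed.

Lemma Re_le x : `|complex.Re x| <= nc x.
Proof.
rewrite ncdef -sqrtr_sqr ler_sqrt ?lerDl ?sqr_ge0 //.
by rewrite addr_ge0 ?sqr_ge0.
Qed.

Lemma Im_le x : `|complex.Im x| <= nc x.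
Proof.
rewrite ncdef -sqrtr_sqr ler_sqrt ?lerDr ?sqr_ge0 //.
by rewrite addr_ge0 ?sqr_ge0.
Qed.

Lemma nc_le_ReIm x : nc x <= `|complex.Re x| + `|complex.Im x|.
Proof.
set a := complex.Re x; set b := complex.Im x.
have ha := normr_ge0 a; have hb := normr_ge0 b.
have -> : `|a| + `|b| = Num.sqrt ((`|a| + `|b|)^+2).
  by rewrite sqrtr_sqr; apply/esym/ger0_norm; lra.
rewrite ncdef ler_sqrt; last by rewrite sqr_ge0.
rewrite -(real_normK (num_real a)) -(real_normK (num_real b)).
nra.
Qed.

Lemma nc_lt_C x (e : R) : (`|x| < e%:C) = (nc x < e).
Proof. by rewrite ncE ltcR. Qed.

Lemma nc_le_C x (e : R) : (e%:C <= `|x|) = (e <= nc x).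
Proof. by rewrite ncE lecR. Qed.

Lemma ncX x n : nc (x ^+ n) = nc x ^+ n.
Proof. by elim: n => [|n IH]; rewrite ?expr0 ?nc1 // !exprS ncM IH. Qed.

Lemma ncZ x : x = 0 -> nc x = 0.
Proof. by move=> ->; rewrite nc0. Qed.

End NC.

End Mod_D.
Import Mod_D.

Module Mod_E.
Local Open Scope ring_scope.

Lemma mono_seq (R : realType) (f : nat -> R) :
  (forall k, f k <= f k.+1) -> forall m n, (m <= n)%N -> f m <= f n.
Proof.
move=> H m n /subnK <-; elim: (n - m)%N => [|k IH]; first by rewrite add0n.
by rewrite addSn; apply: le_trans IH (H _).
Qed.

Definition hp (R : realType) (k : nat) : R := (2^-1) ^+ k.

Lemma hp_ge0 (R : realType) k : 0 <= hp R k.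
Proof. by rewrite /hp exprn_ge0 // invr_ge0 ler0n. Qed.

Lemma hpS (R : realType) k : hp R k.+1 = hp R k / 2.
Proof. by rewrite /hp exprSr. Qed.

Lemma geo_lim_real (R : realType) (u : nat -> R) (C : R) :
  (forall k, `|u k.+1 - u k| <= C * hp R k) ->
  exists l, forall k, `|l - u k| <= 2 * C * hp R k.
Proof.
move=> H.
have C0 : 0 <= C by have := H 0%N; rewrite /hp expr0 mulr1; apply: le_trans.
pose v k := u k - 2 * C * hp R k.
pose t k := u k + 2 * C * hp R k.
have vinc : forall k, v k <= v k.+1.
  move=> k; rewrite /v hpS; have := H k; rewrite ler_norml; lra.
have tdec : forall k, - t k <= - t k.+1.
  move=> k; rewrite /t hpS; have := H k; rewrite ler_norml; lra.
have vt : forall k k', v k' <= t k.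
  move=> k k'; have [kk'|k'k] := leqP k k'.
    have := mono_seq tdec kk'; rewrite /v /t.
    have := hp_ge0 R k'; nra.
  have := mono_seq vinc (ltnW k'k); rewrite /v /t.
  have := hp_ge0 R k; nra.
pose E := fun x => exists k, v k = x.
have hs : has_sup E by split; [exists (v 0%N), 0%N | exists (t 0%N) => x [k <-]].
exists (sup E) => k.
have lo : v k <= sup E by apply: sup_upper_bound hs _ _; exists k.
have up : sup E <= t k by apply: ge_sup; [exists (v 0%N), 0%N | move=> x [k' <-]].
rewrite ler_norml; move: lo up; rewrite /v /t; lra.
Qed.

Lemma ReB (R : realType) (a b : R[i]) : complex.Re (a - b) = complex.Re a - complex.Re b.
Proof. by case: a; case: b. Qed.
Lemma ImB (R : realType) (a b : R[i]) : complex.Im (a - b) = complex.Im a - complex.Im b.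
Proof. by case: a; case: b. Qed.

Lemma geo_lim (R : realType) (u : nat -> R[i]) (C : R) :
  (forall k, nc (u k.+1 - u k) <= C * hp R k) ->
  exists l, forall k, nc (l - u k) <= 4 * C * hp R k.
Proof.
move=> H.
have [lr Hr] := @geo_lim_real R (fun k => complex.Re (u k)) C
  (fun k => le_trans (eq_ind_r (fun y => `|y| <= _) (Re_le _) (esym (ReB _ _))) (H k)).
have [li Hi] := @geo_lim_real R (fun k => complex.Im (u k)) C
  (fun k => le_trans (eq_ind_r (fun y => `|y| <= _) (Im_le _) (esym (ImB _ _))) (H k)).
exists (Complex lr li) => k.
apply: le_trans (nc_le_ReIm _) _.
have := Hr k; have := Hi k.
rewrite ReB ImB /=; lra.
Qed.

End Mod_E.
Import Mod_E.

Module Mod_F.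
Local Open Scope ring_scope.

Definition filt (T : Type) (F : (T -> Prop) -> Prop) :=
  [/\ forall P Q, F P -> F Q -> F (fun t => P t /\ Q t),
      forall P Q : T -> Prop, (forall t, P t -> Q t) -> F P -> F Q &
      F (fun _ => True)].

Definition cvF (R : realType) (T : Type) (F : (T -> Prop) -> Prop) (u : T -> R[i]) (l : R[i]) :=
  forall e : R, 0 < e -> F (fun t => nc (u t - l) < e).

Section CV.
Context (R : realType) (T : Type) (F : (T -> Prop) -> Prop) (hF : filt F).

Lemma cv_cst (c : R[i]) : cvF F (fun _ => c) c.
Proof.
move=> e e0; case: hF => _ hm ht; apply: hm ht => _ _.
by rewrite subrr nc0.
Qed.

Lemma cv_add (u v : T -> R[i]) l m : cvF F u l -> cvF F v m ->
  cvF F (fun t => u t + v t) (l + m).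
Proof.
move=> hu hv e e0; case: hF => hand hm _.
have e2 : 0 < e / 2 by rewrite divr_gt0.
apply: hm (hand _ _ (hu _ e2) (hv _ e2)) => t [h1 h2].
have -> : u t + v t - (l + m) = (u t - l) + (v t - m) by ring.
apply: le_lt_trans (ncD _ _) _; lra.
Qed.

Lemma cv_opp (u : T -> R[i]) l : cvF F u l -> cvF F (fun t => - u t) (- l).
Proof.
move=> hu e e0; case: hF => _ hm _; apply: hm (hu _ e0) => t.
by rewrite -opprD ncN.
Qed.

Lemma cv_mul (u v : T -> R[i]) l m : cvF F u l -> cvF F v m ->
  cvF F (fun t => u t * v t) (l * m).
Proof.
move=> hu hv e e0; case: hF => hand hm _.
set K := 1 + nc l + nc m.
have K0 : 0 < K by have := nc_ge0 l; have := nc_ge0 m; rewrite /K; lra.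
set eta := e / (K + e).
have Ke : 0 < K + e by lra.
have etaE : eta * (K + e) = e by rewrite /eta divfK // gt_eqF.
have eta0 : 0 < eta by rewrite divr_gt0.
apply: hm (hand _ _ (hu _ eta0) (hv _ eta0)) => t [h1 h2].
have -> : u t * v t - l * m = (u t - l) * (v t - m) + (u t - l) * m + l * (v t - m) by ring.
apply: le_lt_trans (ncD _ _) _.
apply: (@le_lt_trans _ _ (nc ((u t - l) * (v t - m)) + nc ((u t - l) * m) + nc (l * (v t - m)))).
  by rewrite lerD2r ncD.
rewrite !ncM.
have := nc_ge0 (u t - l); have := nc_ge0 (v t - m); have := nc_ge0 l; have := nc_ge0 m.
move: h1 h2 etaE; rewrite /K; nra.
Qed.

Lemma cv_sum (I : Type) (r : seq I) (u : I -> T -> R[i]) (l : I -> R[i]) :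
  (forall x, cvF F (u x) (l x)) ->
  cvF F (fun t => \sum_(x <- r) u x t) (\sum_(x <- r) l x).
Proof.
move=> H; elim: r => [|x r IH].
  rewrite big_nil; under eq_fun do rewrite big_nil; exact: cv_cst.
rewrite big_cons; under eq_fun do rewrite big_cons; exact: cv_add.
Qed.

Lemma cv_prod (I : Type) (r : seq I) (u : I -> T -> R[i]) (l : I -> R[i]) :
  (forall x, cvF F (u x) (l x)) ->
  cvF F (fun t => \prod_(x <- r) u x t) (\prod_(x <- r) l x).
Proof.
move=> H; elim: r => [|x r IH].
  rewrite big_nil; under eq_fun do rewrite big_nil; exact: cv_cst.
rewrite big_cons; under eq_fun do rewrite big_cons; exact: cv_mul.
Qed.

Lemma cv_unique (u : T -> R[i]) l m : (forall P, F P -> exists t, P t) ->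
  cvF F u l -> cvF F u m -> l = m.
Proof.
move=> hne hl hm; apply/eqP; rewrite -subr_eq0 -nc_eq0; apply/eqP.
apply/le_anti; rewrite nc_ge0 andbT; apply/ler_addgt0Pr => e e0.
rewrite add0r; case: hF => hand _ _.
have e2 : 0 < e / 2 by rewrite divr_gt0.
have [t [h1 h2]] := hne _ (hand _ _ (hl _ e2) (hm _ e2)).
have -> : l - m = - (u t - l) + (u t - m) by ring.
apply: le_trans (ncD _ _) _; rewrite ncN; lra.
Qed.

End CV.

End Mod_F.
Import Mod_F.

Module Mod_G.
Local Open Scope ring_scope.
Local Open Scope complex_scope.

Definition F0 (R : realType) (P : R[i] -> Prop) :=
  exists2 del : R, 0 < del & forall z, z != 0 -> nc z < del -> P z.

Definition Fseq (P : nat -> Prop) := exists K, forall k, (K <= k)%N -> P k.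

Lemma filt_F0 (R : realType) : filt (@F0 R).
Proof.
split.
- move=> P Q [d1 d10 h1] [d2 d20 h2]; exists (Num.min d1 d2).
    by rewrite lt_min d10 d20.
  by move=> z z0; rewrite lt_min => /andP[a b]; split; [apply: h1|apply: h2].
- by move=> P Q PQ [d d0 h]; exists d => // z z0 zd; apply/PQ/h.
- by exists 1 => //.
Qed.

Lemma F0_ne (R : realType) (P : R[i] -> Prop) : F0 P -> exists z, P z.
Proof.
move=> [d d0 h]; exists (d / 2)%:C; apply: h.
  by rewrite -[0]/(0%:C) (inj_eq (@complexI R)) gt_eqF // divr_gt0.
rewrite ncR ger0_norm; [lra | apply/ltW; rewrite divr_gt0 //].
Qed.

Lemma filt_Fseq : filt Fseq.
Proof.
split.
- move=> P Q [K1 h1] [K2 h2]; exists (maxn K1 K2) => k.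
  by rewrite geq_max => /andP[a b]; split; [apply: h1|apply: h2].
- by move=> P Q PQ [K h]; exists K => k kK; apply/PQ/h.
- by exists 0%N.
Qed.

Lemma Fseq_ne (P : nat -> Prop) : Fseq P -> exists k, P k.
Proof. by move=> [K h]; exists K; apply: h. Qed.

Definition Dz (R : realType) (f : R[i] -> R[i]) (a : R[i]) :=
  cvF (@F0 R) (fun z => (f z - f 0) / z) a.

Section DZ.
Context (R : realType).
Implicit Types f g : R[i] -> R[i].

Lemma cv_id0 : cvF (@F0 R) (fun z => z) 0.
Proof. by move=> e e0; exists e => // z _; rewrite subr0. Qed.

Lemma Dz_cont f a : Dz f a -> cvF (@F0 R) f (f 0).
Proof.
move=> Df.
have E : f = fun z => f 0 + z * ((f z - f 0) / z).
  apply: funext => z; have [->|z0] := eqVneq z 0; first by rewrite mul0r addr0.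
  by rewrite mulrC divfK // addrC subrK.
rewrite [X in cvF _ X]E.
have := cv_add (filt_F0 R) (cv_cst (filt_F0 R) (f 0)) (cv_mul (filt_F0 R) cv_id0 Df).
by rewrite mul0r addr0.
Qed.

Lemma Dz_cst (c : R[i]) : Dz (fun _ => c) 0.
Proof.
rewrite /Dz; under eq_fun do rewrite subrr mul0r.
exact: cv_cst (filt_F0 R) 0.
Qed.

Lemma Dz_add f g a b : Dz f a -> Dz g b -> Dz (fun z => f z + g z) (a + b).
Proof.
move=> Df Dg; rewrite /Dz.
have := cv_add (filt_F0 R) Df Dg.
congr cvF; apply: funext => z; ring.
Qed.

Lemma Dz_mul f g a b : Dz f a -> Dz g b -> Dz (fun z => f z * g z) (a * g 0 + f 0 * b).
Proof.
move=> Df Dg; rewrite /Dz.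
have := cv_add (filt_F0 R) (cv_mul (filt_F0 R) Df (Dz_cont Dg))
   (cv_mul (filt_F0 R) (cv_cst (filt_F0 R) (f 0)) Dg).
congr cvF; apply: funext => z; ring.
Qed.

Lemma Dz_sum (I : Type) (r : seq I) (f : I -> R[i] -> R[i]) (a : I -> R[i]) :
  (forall x, Dz (f x) (a x)) ->
  Dz (fun z => \sum_(x <- r) f x z) (\sum_(x <- r) a x).
Proof.
move=> H; elim: r => [|x r IH].
  rewrite big_nil; under eq_fun do rewrite big_nil; exact: Dz_cst.
rewrite big_cons; under eq_fun do rewrite big_cons; exact: Dz_add.
Qed.

Lemma Dz_prod (I : eqType) (r : seq I) (f : I -> R[i] -> R[i]) (a : I -> R[i]) :
  uniq r -> (forall x, Dz (f x) (a x)) ->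
  Dz (fun z => \prod_(x <- r) f x z)
     (\sum_(x <- r) a x * \prod_(y <- r | y != x) f y 0).
Proof.
move=> + H; elim: r => [|x r IH].
  by move=> _; rewrite big_nil; under eq_fun do rewrite big_nil; exact: Dz_cst.
move=> /= /andP[xr ur].
under eq_fun do rewrite big_cons.
have := Dz_mul (H x) (IH ur); congr Dz.
rewrite big_cons big_cons eqxx /=; congr (_ + _).
  congr (_ * _); rewrite big_seq_cond [RHS]big_seq_cond; apply: eq_bigl => y.
  case: (boolP (y \in r)) => //= yr.
  by case: eqVneq => // yx; move: yr; rewrite yx (negbTE xr).
rewrite big_distrr /= big_seq [RHS]big_seq; apply: eq_bigr => y yr.
rewrite big_cons; case: eqVneq => [xy|_]; first by rewrite xy yr in xr.
by rewrite /= mulrCA.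
Qed.

Lemma Dz_unique f a b : Dz f a -> Dz f b -> a = b.
Proof. by move=> h1 h2; apply: (cv_unique (filt_F0 R) (@F0_ne R) h1 h2). Qed.

End DZ.

End Mod_G.
Import Mod_G.

Module Mod_H.
Local Open Scope ring_scope.

Definition Xt (R : realType) (N : nat) (d : 'I_N -> nat) (X : mxtuple R d) (v : tensor R d) : tensor R d :=
  fun j => \sum_(k : midx d) (\sum_(i < N) X i (j i) (k i) *
       \prod_(i' < N | i' != i) mxtuple1 R d i' (j i') (k i')) * v k.

Lemma Dz_act (R : realType) (N : nat) (d : 'I_N -> nat) (g : R[i] -> mxtuple R d)
   (X : mxtuple R d) (v : tensor R d) :
  g 0 = mxtuple1 R d -> (forall i a b, Dz (fun z => g z i a b) (X i a b)) ->
  forall j, Dz (fun z => act (g z) v j) (Xt X v j).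
Proof.
move=> g0 Dg j; rewrite /act /Xt.
apply: Dz_sum => k.
have := Dz_mul (Dz_prod (index_enum_uniq _) (fun i => Dg i (j i) (k i))) (Dz_cst (v k)).
by rewrite mulr0 addr0 g0.
Qed.

Lemma Dz_det (R : realType) (n : nat) (M : R[i] -> 'M[R[i]]_n) (X : 'M[R[i]]_n) :
  M 0 = 1%:M -> (forall a b, Dz (fun z => M z a b) (X a b)) ->
  Dz (fun z => \det (M z)) (\tr X).
Proof.
move=> M0 DM.
have : Dz (fun z => \det (M z))
   (\sum_(s : 'S_n) ((-1) ^+ s * \sum_(i < n) X i (s i) *
       \prod_(i' < n | i' != i) (1%:M : 'M[R[i]]_n) i' (s i'))).
  apply: Dz_sum => s.
  have := Dz_mul (Dz_cst ((-1) ^+ s)) (Dz_prod (index_enum_uniq _) (fun i => DM i (s i))).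
  by rewrite mul0r add0r M0.
congr Dz.
rewrite (bigD1 1%g) //= odd_perm1 expr0 mul1r [X in _ + X]big1 ?addr0.
  rewrite /mxtrace; apply: eq_bigr => i _; rewrite perm1 big1 ?mulr1 // => i' _.
  by rewrite perm1 mxE eqxx.
move=> s s1; rewrite big1 ?mulr0 // => i _.
have [si|si] := eqVneq (s i) i.
  have [i' si'] : exists i', s i' != i'.
    apply/existsP; apply: contraR s1 => /existsPn H; apply/eqP/permP => x.
    by have := H x; rewrite negbK perm1 => /eqP.
  have i'i : i' != i by apply: contraNneq si' => ->; rewrite si.
  by rewrite (bigD1 i') //= mxE eq_sym (negbTE si') mul0r mulr0.
have ssi : s (s i) != s i by rewrite (inj_eq perm_inj).
by rewrite (bigD1 (s i)) //= mxE eq_sym (negbTE ssi) mul0r mulr0.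
Qed.

End Mod_H.
Import Mod_H.

Module Mod_I.
Local Open Scope ring_scope.

Section SS.
Context (R : realType) (N : nat) (d : 'I_N -> nat).
Implicit Types (g h : mxtuple R d) (v psi : tensor R d).

Definition tinv g : mxtuple R d := fun i => invmx (g i).

Fixpoint tpow g n : mxtuple R d :=
  if n is n'.+1 then tmul g (tpow g n') else mxtuple1 R d.

Lemma inG1 : inG (mxtuple1 R d).
Proof. by move=> i; rewrite /mxtuple1 det1. Qed.

Lemma inG_mul g h : inG g -> inG h -> inG (tmul g h).
Proof. by move=> Hg Hh i; rewrite /tmul det_mulmx Hg Hh mulr1. Qed.

Lemma inG_inv g : inG g -> inG (tinv g).
Proof. by move=> Hg i; rewrite /tinv det_inv Hg invr1. Qed.

Lemma inG_pow g n : inG g -> inG (tpow g n).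
Proof. by move=> Hg; elim: n => [|n IH] /=; [exact: inG1 | exact: inG_mul]. Qed.

Lemma tmul_inv g : inG g -> tmul (tinv g) g = mxtuple1 R d.
Proof.
move=> Hg; apply: functional_extensionality_dep => i.
by rewrite /tmul /tinv /mxtuple1 mulVmx // unitmxE Hg unitr1.
Qed.

Lemma act_pow g c psi : act g psi = (fun j => c * psi j) ->
  forall n, act (tpow g n) psi = (fun j => c ^+ n * psi j).
Proof.
move=> H; elim=> [|n IH] /=.
  by rewrite act1; apply: funext => j; rewrite expr0 mul1r.
rewrite -act_mul IH actZ H; apply: funext => j.
by rewrite exprS mulrA [c * _]mulrC.
Qed.

Lemma ss_nonzero psi : semistable psi -> exists j, psi j != 0.
Proof.
move=> [e [e0 H]]; have [j hj] := H _ inG1; exists j.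
rewrite act1 nc_le_C in hj; rewrite -nc_eq0 gt_eqF //.
exact: lt_le_trans hj.
Qed.

Lemma ss_lt1 psi g c : semistable psi -> inG g ->
  act g psi = (fun j => c * psi j) -> nc c < 1 -> False.
Proof.
move=> [e [e0 H]] Hg Hc c1.
set S := \sum_(j : midx d) nc (psi j).
have S0 : 0 <= S by apply: sumr_ge0 => j _; exact: nc_ge0.
have eS : 0 < e / (S + 1) by rewrite divr_gt0 //; lra.
have [n hn] := pow_small (nc_ge0 c) c1 eS.
have [j hj] := H _ (inG_pow n Hg).
rewrite (act_pow Hc) nc_le_C ncM ncX in hj.
have pj : nc (psi j) <= S.
  by rewrite /S (bigD1 j) //= lerDl sumr_ge0 // => k _; exact: nc_ge0.
have hS : e / (S + 1) * (S + 1) = e by rewrite divfK // gt_eqF //; lra.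
have := nc_ge0 (psi j); have := exprn_ge0 n (nc_ge0 c).
move: hj hn pj hS; set q := nc c ^+ n; set a := e / (S + 1); nra.
Qed.

Lemma ss_mod1 psi g c : semistable psi -> inG g ->
  act g psi = (fun j => c * psi j) -> nc c = 1.
Proof.
move=> Hs Hg Hc.
have Hinv : forall j, psi j = c * act (tinv g) psi j.
  move=> j; have := act_mul (tinv g) g psi; rewrite tmul_inv // act1 Hc actZ.
  by move=> /(congr1 (fun f => f j)).
have [j pj] := ss_nonzero Hs.
have c0 : c != 0.
  by apply: contraNneq pj => c0; rewrite Hinv c0 mul0r.
have Hc' : act (tinv g) psi = (fun j => c^-1 * psi j).
  by apply: funext => k; rewrite Hinv mulrA mulVf // mul1r.
case: (ltgtP (nc c) 1) => // h.
  by case: (ss_lt1 Hs Hg Hc h).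
exfalso; apply: (ss_lt1 Hs (inG_inv Hg) Hc').
by rewrite ncV invf_lt1 // (lt_trans ltr01 h).
Qed.

End SS.

End Mod_I.
Import Mod_I.

Module Mod_J.
Local Open Scope ring_scope.
Local Open Scope complex_scope.

Lemma ReE1 (R : realType) (t : R) (y : R[i]) :
  complex.Re (1 + t%:C + t%:C * y) = 1 + t + t * complex.Re y.
Proof. by case: y => a b /=; rewrite mul0r subr0. Qed.

Lemma Re_le_nc (R : realType) (x : R[i]) : complex.Re x <= nc x.
Proof. exact: le_trans (ler_norm _) (Re_le x). Qed.

Lemma Re_ge_nc (R : realType) (x : R[i]) : - nc x <= complex.Re x.
Proof. by rewrite lerNl; apply: le_trans (Re_le x); rewrite -normrN ler_norm. Qed.

Lemma mod1_deriv (R : realType) (c : R[i] -> R[i]) (l : R[i]) :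
  c 0 = 1 -> (forall z, nc (c z) = 1) -> Dz c l -> l = 0.
Proof.
move=> c0 c1 Dc; apply/eqP; apply/negP => /negP l0.
have nl : 0 < nc l by rewrite lt_def nc_eq0 l0 nc_ge0.
have e0 : 0 < nc l / 2 by rewrite divr_gt0.
have [del del0 H] := Dc _ e0.
set t := del * nc l / 2.
have t0 : 0 < t by rewrite /t divr_gt0 // mulr_gt0.
set z := t%:C / l.
have zn : nc z = del / 2.
  by rewrite /z ncM ncV ncR gtr0_norm // /t mulrAC mulfK // gt_eqF.
have z0 : z != 0.
  by rewrite -nc_eq0 zn gt_eqF // divr_gt0.
have := H z z0; rewrite zn; move/(_ ltac:(lra)).
set w := (c z - c 0) / z - l => hw.
have cz : c z = 1 + t%:C + t%:C * (w / l).
  rewrite /w c0 /z; field.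
  by rewrite l0 fmorph_eq0 gt_eqF.
have := Re_le_nc (c z); rewrite c1 cz ReE1.
have := Re_ge_nc (w / l); rewrite ncM ncV.
have : nc w / nc l < 1 / 2.
  by rewrite ltr_pdivrMr // mulrC mul1r.
rewrite -[nc w / nc l]mulrC; move: t0; nra.
Qed.

Lemma tangent_Dz (R : realType) (N : nat) (d : 'I_N -> nat) (S : mxtuple R d -> Prop) X :
  tangent_at_1 S X -> exists g : R[i] -> mxtuple R d,
    [/\ forall z, S (g z), g 0 = mxtuple1 R d &
        forall i a b, Dz (fun z => g z i a b) (X i a b)].
Proof.
move=> [g [Sg [g0 H]]]; exists g; split => // i a b e e0.
have [del [del0 Hd]] := H e e0.
exists del => // z z0 zd.
rewrite g0 -nc_lt_C; apply: Hd => //; by rewrite nc_lt_C.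
Qed.

Lemma ray_props (R : realType) (N : nat) (d : 'I_N -> nat) (psi : tensor R d) X :
  semistable psi -> tangent_at_1 (stab_ray psi) X ->
  (forall i, \tr (X i) = 0) /\ (forall j, Xt X psi j = 0).
Proof.
move=> Hs /tangent_Dz [g [Sg g0 Dg]]; split.
  move=> i; apply: (@Dz_unique R (fun z => \det (g z i))).
    by apply: Dz_det => //; rewrite g0.
  have -> : (fun z => \det (g z i)) = (fun _ => 1).
    by apply: funext => z; case: (Sg z) => hG _; apply: hG.
  exact: Dz_cst.
have [j0 pj0] := ss_nonzero Hs.
pose cz z := act (g z) psi j0 / psi j0.
have Hc : forall z, act (g z) psi = (fun j => cz z * psi j).
  move=> z; case: (Sg z) => _ [c Hc]; apply: funext => j.
  by rewrite Hc /cz Hc mulfK.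
have c1 : forall z, nc (cz z) = 1.
  by move=> z; case: (Sg z) => hG _; apply: (ss_mod1 Hs hG (Hc z)).
have cz0 : cz 0 = 1 by rewrite /cz g0 act1 mulfV.
have Dact := Dz_act psi g0 Dg.
have Dc : Dz cz (Xt X psi j0 / psi j0).
  have := Dz_mul (Dact j0) (Dz_cst (psi j0)^-1).
  by rewrite mulr0 addr0.
have l0 := mod1_deriv cz0 c1 Dc.
move=> j; apply: (@Dz_unique R (fun z => act (g z) psi j)); first exact: Dact.
have -> : (fun z => act (g z) psi j) = (fun z => cz z * psi j).
  by apply: funext => z; rewrite Hc.
have := Dz_mul Dc (Dz_cst (psi j)).
by rewrite l0 mul0r mulr0 addr0.
Qed.

End Mod_J.
Import Mod_J.

Module Mod_K.
Local Open Scope ring_scope.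

Lemma nc_sum (R : realType) (I : Type) (r : seq I) (f : I -> R[i]) :
  nc (\sum_(x <- r) f x) <= \sum_(x <- r) nc (f x).
Proof.
elim: r => [|x r IH]; first by rewrite !big_nil nc0.
rewrite !big_cons; apply: le_trans (ncD _ _) _; exact: lerD.
Qed.

Definition rowbound (R : realType) (n : nat) (A : 'M[R[i]]_n) (r : R) :=
  forall a, \sum_b nc (A a b) <= r.

Definition mpow (R : realType) (n : nat) (A : 'M[R[i]]_n) (k : nat) : 'M[R[i]]_n :=
  iter k (mulmx A) 1%:M.

Section RB.
Context (R : realType) (n : nat).
Implicit Types A B : 'M[R[i]]_n.

Lemma rb_entry A r a b : rowbound A r -> nc (A a b) <= r.
Proof.
move=> H; apply: le_trans (H a); rewrite (bigD1 b) //= lerDl.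
by apply: sumr_ge0 => c _; exact: nc_ge0.
Qed.

Lemma rb_mono A r s : r <= s -> rowbound A r -> rowbound A s.
Proof. by move=> rs H a; apply: le_trans rs. Qed.

Lemma rb_add A B r s : rowbound A r -> rowbound B s -> rowbound (A + B) (r + s).
Proof.
move=> HA HB a; apply: le_trans (lerD (HA a) (HB a)).
rewrite -big_split /=; apply: ler_sum => b _; rewrite mxE; exact: ncD.
Qed.

Lemma rb_sub A B r s : rowbound A r -> rowbound B s -> rowbound (A - B) (r + s).
Proof.
move=> HA HB a; apply: le_trans (lerD (HA a) (HB a)).
rewrite -big_split /=; apply: ler_sum => b _; rewrite !mxE.
by apply: le_trans (ncD _ _) _; rewrite ncN.
Qed.

Lemma rb_scale A r c : rowbound A r -> rowbound (c *: A) (nc c * r).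
Proof.
move=> HA a; under eq_bigr do rewrite mxE ncM.
rewrite -big_distrr /=; apply: ler_wpM2l (HA a); exact: nc_ge0.
Qed.

Lemma rb_1 : rowbound (1%:M : 'M[R[i]]_n) 1.
Proof.
move=> a; rewrite (bigD1 a) //= big1 ?addr0 ?mxE ?eqxx ?nc1 //.
by move=> b ba; rewrite mxE eq_sym (negbTE ba) nc0.
Qed.

Lemma rb_mul A B r s : 0 <= s -> rowbound A r -> rowbound B s -> rowbound (A *m B) (r * s).
Proof.
move=> s0 HA HB a.
apply: (@le_trans _ _ (\sum_b \sum_c nc (A a c) * nc (B c b))).
  apply: ler_sum => b _; rewrite mxE; apply: le_trans (nc_sum _ _) _.
  by apply: ler_sum => c _; rewrite ncM.
rewrite exchange_big /=.
apply: (@le_trans _ _ (\sum_c nc (A a c) * s)).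
  apply: ler_sum => c _; rewrite -big_distrr /=; apply: ler_wpM2l (HB c).
  exact: nc_ge0.
by rewrite -big_distrl /= ler_wpM2r.
Qed.

Lemma mpowS A k : mpow A k.+1 = A *m mpow A k.
Proof. by []. Qed.

Lemma mpow1 A : mpow A 1 = A.
Proof. by rewrite mpowS /mpow /= mulmx1. Qed.

Lemma mpow_double A k : mpow A (k.*2) = mpow (A *m A) k.
Proof.
elim: k => [|k IH] //.
by rewrite doubleS !mpowS IH mulmxA.
Qed.

Lemma rb_pow A r k : 0 <= r -> rowbound A r -> rowbound (mpow A k) (r ^+ k).
Proof.
move=> r0 HA; elim: k => [|k IH]; first by rewrite expr0; exact: rb_1.
by rewrite mpowS exprS; apply: rb_mul => //; rewrite exprn_ge0.
Qed.

Lemma rb_powdiff A B M e k : 1 <= M -> 0 <= e ->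
  rowbound A M -> rowbound B M -> rowbound (A - B) e ->
  rowbound (mpow A k - mpow B k) (k%:R * e * M ^+ k).
Proof.
move=> M1 e0 HA HB HAB; elim: k => [|k IH].
  by move=> a; rewrite mul0r mul0r; under eq_bigr do rewrite /mpow /= subrr mxE nc0; rewrite big1.
have -> : mpow A k.+1 - mpow B k.+1 = A *m (mpow A k - mpow B k) + (A - B) *m mpow B k.
  by rewrite !mpowS mulmxBr mulmxBl addrA subrK.
have M0 : 0 <= M by lra.
have Mk : 1 <= M ^+ k by rewrite exprn_ege1.
apply: rb_mono (rb_add (rb_mul _ HA IH) (rb_mul _ HAB (rb_pow k M0 HB))); last first.
- by rewrite exprn_ge0.
- by rewrite mulr_ge0 ?mulr_ge0 ?exprn_ge0.
rewrite exprS -natr1.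
have : 0 <= k%:R :> R by rewrite ler0n.
have : 0 <= M ^+ k by rewrite exprn_ge0.
set q := M ^+ k; set kk := k%:R => q0 k0.
have : 0 <= e * q * (M - 1) by rewrite !mulr_ge0 // subr_ge0.
nra.
Qed.

Lemma det_mpow A k : \det (mpow A k) = \det A ^+ k.
Proof.
elim: k => [|k IH]; first by rewrite /mpow /= det1 expr0.
by rewrite mpowS det_mulmx IH exprS.
Qed.

End RB.

End Mod_K.
Import Mod_K.

Module Mod_L.
Local Open Scope ring_scope.

Section HP.
Context (R : realType).

Lemma hp0 : hp R 0 = 1.
Proof. by rewrite /hp expr0. Qed.

Lemma hp_le1 k : hp R k <= 1.
Proof. by rewrite /hp exprn_ile1 // ?invr_ge0 ?ler0n // invf_le1 // ler1n. Qed.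

Lemma hp_gt0 k : 0 < hp R k.
Proof. by rewrite /hp exprn_gt0 // invr_gt0 ltr0n. Qed.

Lemma tw_hp k : (2 ^ k)%:R * hp R k = 1.
Proof. by rewrite /hp natrX -exprMn mulfV ?expr1n // pnatr_eq0. Qed.

Lemma hp_dec k k' : (k <= k')%N -> hp R k' <= hp R k.
Proof.
move=> kk; rewrite -lerN2; apply: (mono_seq (f := fun k => - hp R k)) kk => j.
rewrite lerN2 hpS; have := hp_gt0 j; lra.
Qed.

Lemma hp_small e : 0 < e -> Fseq (fun k => hp R k < e).
Proof.
move=> e0.
have h0 : 0 <= (2^-1 : R) by rewrite invr_ge0 ler0n.
have h1 : (2^-1 : R) < 1 by rewrite invf_lt1 ?ltr1n ?ltr0n.
have [K hK] := pow_small h0 h1 e0.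
by exists K => k kK; apply: le_lt_trans (hp_dec kK) hK.
Qed.

Lemma bern_up (x : R) j : 0 <= x -> x <= 1/2 -> (1 + x * hp R j) ^+ (2 ^ j) <= 1 + 2 * x.
Proof.
move=> x0 x1.
set y := x * hp R j; set m := (2 ^ j)%N.
have y0 : 0 <= y by rewrite mulr_ge0 // ltW // hp_gt0.
have y1 : y <= x by rewrite /y ler_piMr // hp_le1.
have my : m%:R * y = x by rewrite /y mulrCA tw_hp mulr1.
have pq : (1 + y) ^+ m * (1 - y) ^+ m <= 1.
  rewrite -exprMn exprn_ile1 //; nra.
have q1 : 1 - x <= (1 - y) ^+ m.
  have := @bernoulli R (- y) m ltac:(lra); rewrite mulrN my.
  by rewrite -!(addrC (- _)).
have p0 : 0 <= (1 + y) ^+ m by rewrite exprn_ge0 //; lra.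
move: pq q1 p0; set p := (1 + y) ^+ m; set q := (1 - y) ^+ m => pq q1 p0.
have : p * (1 - x) <= p * q by rewrite ler_wpM2l.
nra.
Qed.

Lemma pow_near1 (w : R[i]) m : nc ((1 + w) ^+ m - 1) <= (1 + nc w) ^+ m - 1.
Proof.
elim: m => [|m IH]; first by rewrite !expr0 !subrr nc0.
have -> : (1 + w) ^+ m.+1 - 1 = (1 + w) * ((1 + w) ^+ m - 1) + w.
  by rewrite exprS; ring.
apply: le_trans (ncD _ _) _; rewrite ncM.
have h1 : nc (1 + w) <= 1 + nc w by apply: le_trans (ncD _ _) _; rewrite nc1.
have := nc_ge0 ((1 + w) ^+ m - 1); have := nc_ge0 (1 + w); have := nc_ge0 w.
rewrite exprS.
have : 1 <= (1 + nc w) ^+ m by rewrite exprn_ege1 // lerDl nc_ge0.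
move: IH h1; set q := (1 + nc w) ^+ m; set a := nc ((1 + w) ^+ m - 1). nra.
Qed.

End HP.

End Mod_L.
Import Mod_L.

Module Mod_M.
Local Open Scope ring_scope.
Local Open Scope complex_scope.

Definition Pk (R : realType) (n : nat) (A : 'M[R[i]]_n) (k : nat) : 'M[R[i]]_n :=
  mpow (1%:M + (hp R k)%:C *: A) (2 ^ k).

Section PK.
Context (R : realType) (n : nat).
Implicit Types A : 'M[R[i]]_n.

Lemma nc_hp k : nc (hp R k)%:C = hp R k.
Proof. by rewrite ncR ger0_norm // ltW // hp_gt0. Qed.

Lemma sq1A (c : R[i]) A :
  (1%:M + c *: A) *m (1%:M + c *: A) = 1%:M + (c + c) *: A + (c * c) *: (A *m A).
Proof.
rewrite mulmxDl !mulmxDr mul1mx mulmx1 -scalemxAl mul1mx -scalemxAr scalerA scalerDl.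
by rewrite !addrA.
Qed.

Lemma Pk_step A a k : rowbound A a -> 0 <= a -> a <= 1/2 ->
  rowbound (Pk A k.+1 - Pk A k) (a ^+ 2 / 2 * hp R k).
Proof.
move=> HA a0 a1.
set c := (hp R k.+1)%:C.
have hk : hp R k = hp R k.+1 + hp R k.+1 by rewrite hpS; field.
have cc : c + c = (hp R k)%:C by rewrite hk rmorphD.
rewrite /Pk expnS mul2n mpow_double sq1A cc.
set Y := 1%:M + (hp R k)%:C *: A.
set M := (1 + hp R k.+1 * a) ^+ 2.
have hp1 := hp_gt0 R k.+1; have hp0 := hp_gt0 R k.
have M1 : 1 <= M by rewrite /M exprn_ege1 // lerDl mulr_ge0 // ltW.
have e0 : 0 <= hp R k.+1 ^+ 2 * a ^+ 2 by rewrite mulr_ge0 ?sqr_ge0.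
have HY : rowbound Y M.
  apply: rb_mono (rb_add (@rb_1 R n) (rb_scale _ HA)).
  rewrite nc_hp /M hk; have := sqr_ge0 (hp R k.+1 * a); rewrite exprMn; nra.
have HYc : rowbound (Y + (c * c) *: (A *m A)) M.
  rewrite /Y -cc -sq1A /M expr2.
  have Hc1 : rowbound (1%:M + c *: A) (1 + hp R k.+1 * a).
    by have := rb_add (@rb_1 R n) (rb_scale c HA); rewrite /c nc_hp.
  by apply: (rb_mul _ Hc1 Hc1); rewrite addr_ge0 // mulr_ge0 // ltW.
have HD : rowbound (Y + (c * c) *: (A *m A) - Y) (hp R k.+1 ^+ 2 * a ^+ 2).
  rewrite addrC addKr.
  have := rb_scale (c * c) (rb_mul a0 HA HA).
  by rewrite ncM /c nc_hp -expr2 -expr2.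
have := rb_powdiff (2 ^ k) M1 e0 HYc HY HD.
apply: rb_mono.
have hM : M ^+ (2 ^ k) <= 2.
  rewrite /M -exprM mulnC -expnSr [hp R k.+1 * a]mulrC.
  apply: le_trans (bern_up k.+1 a0 a1) _; lra.
have tw := tw_hp R k.
have hps : hp R k.+1 = hp R k / 2 by rewrite hpS.
rewrite hps.
have : 0 <= (2 ^ k)%:R :> R by rewrite ler0n.
have : 0 <= M ^+ (2 ^ k) by rewrite exprn_ge0 // ltW // (lt_le_trans ltr01).
move: hM tw; set t := (2 ^ k)%:R; set q := M ^+ (2 ^ k) => hM tw q0 t0.
have : 0 <= a ^+ 2 by rewrite sqr_ge0.
set aa := a ^+ 2 => aa0.
have -> : t * ((hp R k / 2) ^+ 2 * aa) * q = (t * hp R k) * hp R k * aa * q / 4.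
  by rewrite expr2; field.
rewrite tw mul1r.
have : 0 <= hp R k * aa by rewrite mulr_ge0 // ltW.
nra.
Qed.

Lemma Pk0 A : Pk A 0 = 1%:M + A.
Proof. by rewrite /Pk hp0 scale1r expn0 mpow1. Qed.

Lemma exp_exists A a : rowbound A a -> 0 <= a -> a <= 1/2 ->
  exists E : 'M[R[i]]_n,
    (forall u v, cvF Fseq (fun k => Pk A k u v) (E u v)) /\
    (forall u v, nc (E u v - (1%:M + A) u v) <= 2 * a ^+ 2).
Proof.
move=> HA a0 a1.
have H : forall uv : 'I_n * 'I_n, exists l : R[i],
    forall k, nc (l - Pk A k uv.1 uv.2) <= 4 * (a ^+ 2 / 2) * hp R k.
  move=> [u v]; apply: geo_lim => k /=.
  by have := rb_entry u v (Pk_step k HA a0 a1); rewrite !mxE.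
have [f Hf] := choice H.
exists (\matrix_(u, v) f (u, v)); split => u v; rewrite mxE.
  move=> e e0.
  have e' : 0 < e / (2 * a ^+ 2 + 1) by rewrite divr_gt0 //; have := sqr_ge0 a; lra.
  have [K hK] := hp_small e'.
  exists K => k kK; rewrite ncB.
  have := Hf (u, v) k; have := hK k kK => /= h1 h2.
  have hE : e / (2 * a ^+ 2 + 1) * (2 * a ^+ 2 + 1) = e.
    by rewrite divfK // gt_eqF //; have := sqr_ge0 a; lra.
  have := hp_gt0 R k; have := sqr_ge0 a.
  move: h1 h2 hE; set p := hp R k; set b := e / _; set aa := a ^+ 2; nra.
have := Hf (u, v) 0%N; rewrite Pk0 hp0 /=.
by have -> : 4 * (a ^+ 2 / 2) * 1 = 2 * a ^+ 2 by field.
Qed.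

End PK.

End Mod_M.
Import Mod_M.

Module Mod_N.
Local Open Scope ring_scope.
Local Open Scope complex_scope.

Lemma Dz_line (R : realType) (n : nat) (A : 'M[R[i]]_n) u v :
  Dz (fun w => (1%:M + w *: A) u v) (A u v).
Proof.
move=> e e0; exists 1 => // w w0 _.
rewrite !mxE mul0r addr0 [_ + w * _]addrC addrK mulrC mulKf // subrr nc0 //.
Qed.

Lemma filt_all (T : Type) (F : (T -> Prop) -> Prop) (I : finType) (P : I -> T -> Prop) :
  filt F -> (forall i, F (P i)) -> F (fun t => forall i, P i t).
Proof.
move=> [hand hm ht] H.
suff : forall s : seq I, F (fun t => forall i, i \in s -> P i t).
  by move=> /(_ (enum I)); apply: hm => t Ht i; apply: Ht; rewrite mem_enum.
elim=> [|x s IH]; first by apply: hm ht => t _ i.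
apply: hm (hand _ _ (H x) IH) => t [h1 h2] i; rewrite inE => /orP[/eqP->//|].
exact: h2.
Qed.

Lemma det_cv (R : realType) (n : nat) (Ms : nat -> 'M[R[i]]_n) (E : 'M[R[i]]_n) :
  (forall u v, cvF Fseq (fun k => Ms k u v) (E u v)) ->
  cvF Fseq (fun k => \det (Ms k)) (\det E).
Proof.
move=> H; rewrite /determinant.
apply: (cv_sum filt_Fseq) => s.
apply: (cv_mul filt_Fseq); first exact: (cv_cst filt_Fseq).
apply: (cv_prod filt_Fseq) => i; exact: H.
Qed.

Lemma det_lim (R : realType) (n : nat) (A : 'M[R[i]]_n) a :
  rowbound A a -> 0 <= a -> a <= 1/2 -> \tr A = 0 ->
  cvF Fseq (fun k => \det (Pk A k)) 1.
Proof.
move=> HA a0 a1 trA e e0.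
have D : Dz (fun w => \det (1%:M + w *: A)) 0.
  rewrite -trA; apply: Dz_det; first by rewrite scale0r addr0.
  move=> u v; exact: Dz_line.
set eta := Num.min (1/2) (e / 4).
have eta0 : 0 < eta by rewrite lt_min; apply/andP; split; [lra|rewrite divr_gt0].
have eta1 : eta <= 1/2 by rewrite ge_min lexx.
have eta2 : eta <= e / 4 by rewrite ge_min lexx orbT.
have [del del0 Hd] := D _ eta0.
have [K HK] := hp_small del0.
exists K => k kK.
set w := (hp R k)%:C.
have w0 : w != 0 by rewrite -nc_eq0 /w nc_hp gt_eqF // hp_gt0.
have := Hd w w0; rewrite /w nc_hp; move/(_ (HK k kK)).
rewrite scale0r addr0 det1 subr0 -/w.
set z := \det (1%:M + w *: A) - 1 => hz.
have hz' : nc z <= eta * hp R k.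
  have : nc (z / w) * nc w = nc z by rewrite -ncM mulfVK.
  rewrite /w nc_hp => <-; apply: ler_wpM2r; [exact/ltW/hp_gt0|exact: ltW].
rewrite /Pk det_mpow -/w.
have -> : \det (1%:M + w *: A) = 1 + z by rewrite /z addrCA subrr addr0.
apply: le_lt_trans (pow_near1 _ _) _.
have h1 : (1 + nc z) ^+ (2 ^ k) <= (1 + eta * hp R k) ^+ (2 ^ k).
  apply: lerXn2r; rewrite ?nnegrE ?lerD2l //.
    by rewrite addr_ge0 ?nc_ge0.
  by rewrite addr_ge0 // mulr_ge0 // ltW // hp_gt0.
have h2 := bern_up k (ltW eta0) eta1.
lra.
Qed.

End Mod_N.
Import Mod_N.

Module Mod_O.
Local Open Scope ring_scope.
Local Open Scope complex_scope.

Section ACT.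
Context (R : realType) (N : nat) (d : 'I_N -> nat).
Implicit Types (g B E : mxtuple R d) (v psi : tensor R d).

Lemma act_cv (Ms : nat -> mxtuple R d) E v :
  (forall i a b, cvF Fseq (fun k => Ms k i a b) (E i a b)) ->
  forall j, cvF Fseq (fun k => act (Ms k) v j) (act E v j).
Proof.
move=> H j; rewrite /act.
apply: (cv_sum filt_Fseq) => k.
apply: (cv_mul filt_Fseq); last exact: (cv_cst filt_Fseq).
apply: (cv_prod filt_Fseq) => i; exact: H.
Qed.

Lemma act_mpow B m v : act (fun i => mpow (B i) m) v = iter m (act B) v.
Proof.
elim: m => [|m IH]; first exact: act1.
by rewrite iterS -IH act_mul.
Qed.

Lemma nc_prod (I : Type) (r : seq I) (f : I -> R[i]) :
  nc (\prod_(x <- r) f x) = \prod_(x <- r) nc (f x).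
Proof.
elim: r => [|x r IH]; first by rewrite !big_nil nc1.
by rewrite !big_cons ncM IH.
Qed.

Lemma act_bound g v r (bs : 'I_N -> R) :
  (forall i, rowbound (g i) (bs i)) -> 0 <= r -> (forall j, nc (v j) <= r) ->
  forall j, nc (act g v j) <= (\prod_(i < N) bs i) * r.
Proof.
move=> Hg r0 Hv j; rewrite /act.
apply: le_trans (nc_sum _ _) _.
apply: (@le_trans _ _ (\sum_(k : midx d) (\prod_(i < N) nc (g i (j i) (k i))) * r)).
  apply: ler_sum => k _; rewrite ncM nc_prod; apply: ler_wpM2l (Hv k).
  by apply: prodr_ge0 => i _; exact: nc_ge0.
rewrite -big_distrl /= ler_wpM2r // -(prod_sum_dep (fun i b => nc (g i (j i) b))).
apply: ler_prod => i _; rewrite sumr_ge0 //=; last by move=> b _; exact: nc_ge0.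
exact: Hg.
Qed.

Lemma iter_bound B psi (beta r : R) :
  1 <= beta -> 0 <= r ->
  (forall v s, 0 <= s -> (forall j, nc (v j) <= s) -> forall j, nc (act B v j) <= beta * s) ->
  (forall j, nc (act B psi j - psi j) <= r) ->
  forall m j, nc (iter m (act B) psi j - psi j) <= m%:R * beta ^+ m * r.
Proof.
move=> b1 r0 HB H1; elim=> [|m IH] j.
  by rewrite /= subrr nc0 mul0r mul0r.
have E : iter m.+1 (act B) psi j - psi j =
    act B (fun j => iter m (act B) psi j - psi j) j + (act B psi j - psi j).
  by rewrite actB iterS; ring.
rewrite E; apply: le_trans (ncD _ _) _.
have s0 : 0 <= m%:R * beta ^+ m * r.
  by rewrite mulr_ge0 // mulr_ge0 // ?ler0n // exprn_ge0 //; lra.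
apply: le_trans (lerD (HB _ _ s0 IH j) (H1 j)) _.
rewrite exprS -natr1.
have : 1 <= beta ^+ m by rewrite exprn_ege1.
have : 0 <= m%:R :> R by rewrite ler0n.
set q := beta ^+ m; set mm := m%:R => m0 q1.
have : 0 <= r * (beta * q - 1) by rewrite mulr_ge0 // subr_ge0; nra.
nra.
Qed.

End ACT.

End Mod_O.
Import Mod_O.

Module Mod_P.
Local Open Scope ring_scope.
Local Open Scope complex_scope.

Lemma act_lim (R : realType) (N : nat) (d : 'I_N -> nat) (A : mxtuple R d) (psi : tensor R d) a :
  (forall i, rowbound (A i) a) -> 0 <= a -> a <= 1/2 -> (forall j, Xt A psi j = 0) ->
  forall j, cvF Fseq (fun k => act (fun i => Pk (A i) k) psi j) (psi j).
Proof.
move=> HA a0 a1 HX j0 e e0.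
pose gam (w : R[i]) : mxtuple R d := fun i => 1%:M + w *: A i.
have g0 : gam 0 = mxtuple1 R d.
  by apply: functional_extensionality_dep => i; rewrite /gam scale0r addr0.
have Dact := Dz_act psi g0 (fun i u v => Dz_line (A i) u v).
have tN : 0 < 2 ^+ N + 1 :> R by rewrite ltr_wpDl ?exprn_ge0 ?ler0n.
set eta := e / (2 ^+ N + 1).
have eta0 : 0 < eta by rewrite divr_gt0.
have [del del0 Hd] := filt_all (filt_F0 R) (fun j => Dact j _ eta0).
have [K HK] := hp_small del0.
exists K => k kK.
set w := (hp R k)%:C.
have hpk := hp_gt0 R k.
have w0 : w != 0 by rewrite -nc_eq0 /w nc_hp gt_eqF.
have Hw := Hd w w0; rewrite /w nc_hp in Hw; move: Hw => /(_ (HK k kK)) Hw.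
rewrite g0 act1 -/w in Hw.
set r := eta * hp R k.
have Hr : forall j, nc (act (gam w) psi j - psi j) <= r.
  move=> j; have := Hw j; rewrite HX subr0 => h.
  have : nc ((act (gam w) psi j - psi j) / w) * nc w = nc (act (gam w) psi j - psi j).
    by rewrite -ncM mulfVK.
  rewrite /w nc_hp => <-; apply: ler_wpM2r; [exact: ltW|exact: ltW].
set beta := (1 + hp R k * a) ^+ N.
have b1 : 1 <= beta by rewrite exprn_ege1 // lerDl mulr_ge0 // ltW.
have HB : forall v s, 0 <= s -> (forall j, nc (v j) <= s) ->
    forall j, nc (act (gam w) v j) <= beta * s.
  move=> v s s0 Hv j; have := @act_bound R N d (gam w) v s (fun _ => 1 + hp R k * a).
  rewrite prodr_const card_ord; apply => // i.
  by have := rb_add (@rb_1 R (d i)) (rb_scale w (HA i)); rewrite /w nc_hp.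
have := iter_bound b1 (mulr_ge0 (ltW eta0) (ltW hpk)) HB Hr (2 ^ k) j0.
rewrite -act_mpow.
have -> : (fun i => mpow (gam w i) (2 ^ k)) = (fun i => Pk (A i) k) by [].
move=> h; apply: le_lt_trans h _.
have hb : beta ^+ (2 ^ k) <= 2 ^+ N.
  rewrite /beta -exprM mulnC exprM.
  apply: lerXn2r; rewrite ?nnegrE ?exprn_ge0 //; first by rewrite addr_ge0 // mulr_ge0 // ltW.
  rewrite mulrC; apply: le_trans (bern_up k a0 a1) _; lra.
have tw := tw_hp R k.
have -> : (2 ^ k)%:R * beta ^+ (2 ^ k) * (eta * hp R k) = beta ^+ (2 ^ k) * eta * ((2 ^ k)%:R * hp R k).
  by ring.
rewrite tw mulr1.
have hE : eta * (2 ^+ N + 1) = e by rewrite /eta divfK // gt_eqF.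
have : 0 <= beta ^+ (2 ^ k) by rewrite exprn_ge0 //; lra.
move: hb hE eta0; set q := beta ^+ (2 ^ k); set t := 2 ^+ N; nra.
Qed.

End Mod_P.
Import Mod_P.

Module Mod_Q.
Local Open Scope ring_scope.
Local Open Scope complex_scope.

Lemma Xt_scale (R : realType) (N : nat) (d : 'I_N -> nat) (X : mxtuple R d) (psi : tensor R d) z j :
  Xt (fun i => z *: X i) psi j = z * Xt X psi j.
Proof.
rewrite /Xt big_distrr; apply: eq_bigr => k _.
rewrite /= mulrA big_distrr /=; congr (_ * _); apply: eq_bigr => i _.
by rewrite mxE mulrA.
Qed.

Lemma curve_point (R : realType) (N : nat) (d : 'I_N -> nat) (X : mxtuple R d) (psi : tensor R d) K z :
  (forall i, \tr (X i) = 0) -> (forall j, Xt X psi j = 0) ->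
  (forall i, rowbound (X i) K) -> 0 <= K -> nc z * K <= 1/2 ->
  exists g, stab_vec psi g /\
    forall i u v, nc (g i u v - (1%:M + z *: X i) u v) <= 2 * (nc z * K) ^+ 2.
Proof.
move=> htr hXt HX K0 hz.
pose A := fun i => z *: X i.
set a := nc z * K.
have HA : forall i, rowbound (A i) a by move=> i; exact: rb_scale.
have a0 : 0 <= a by rewrite mulr_ge0 // nc_ge0.
pose E := fun i => proj1_sig (cid (exp_exists (HA i) a0 hz)).
have HE : forall i, (forall u v, cvF Fseq (fun k => Pk (A i) k u v) (E i u v)) /\
    (forall u v, nc (E i u v - (1%:M + A i) u v) <= 2 * a ^+ 2).
  by move=> i; exact: (proj2_sig (cid (exp_exists (HA i) a0 hz))).
exists E; split; last by move=> i u v; case: (HE i) => _; apply.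
split.
  move=> i; apply: (cv_unique filt_Fseq (@Fseq_ne)).
    by apply: det_cv; case: (HE i).
  apply: (det_lim (HA i) a0 hz).
  by rewrite /A mxtraceZ htr mulr0.
apply: funext => j; apply: (cv_unique filt_Fseq (@Fseq_ne)).
  by apply: act_cv => i u v; case: (HE i) => + _; apply.
apply: (act_lim HA a0 hz) => j'.
by rewrite /A Xt_scale hXt mulr0.
Qed.

Lemma le_sum1 (R : realType) (I : finType) (f : I -> R) x :
  (forall y, 0 <= f y) -> f x <= \sum_y f y.
Proof. by move=> H; rewrite (bigD1 x) //= lerDl sumr_ge0. Qed.

Lemma vec_tangent (R : realType) (N : nat) (d : 'I_N -> nat) (X : mxtuple R d) (psi : tensor R d) :
  (forall i, \tr (X i) = 0) -> (forall j, Xt X psi j = 0) ->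
  tangent_at_1 (stab_vec psi) X.
Proof.
move=> htr hXt.
set K := 1 + \sum_(i < N) \sum_(u < d i) \sum_(v < d i) nc (X i u v).
have S0 : forall i u, 0 <= \sum_(v < d i) nc (X i u v).
  by move=> i u; apply: sumr_ge0 => v _; exact: nc_ge0.
have S1 : forall i, 0 <= \sum_(u < d i) \sum_(v < d i) nc (X i u v).
  by move=> i; apply: sumr_ge0 => u _.
have K1 : 1 <= K.
  by rewrite /K lerDl; apply: sumr_ge0 => i _.
have HX : forall i, rowbound (X i) K.
  move=> i u; apply: le_trans (le_sum1 u (S0 i)) _.
  apply: le_trans (le_sum1 i S1) _; rewrite /K lerDr //.
have K0 : 0 <= K by lra.
have H : forall z : R[i], exists g : mxtuple R d, nc z * K <= 1/2 ->
    stab_vec psi g /\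
    forall i u v, nc (g i u v - (1%:M + z *: X i) u v) <= 2 * (nc z * K) ^+ 2.
  move=> z; case: (boolP (nc z * K <= 1/2)) => hz.
    by have [g hg] := curve_point htr hXt HX K0 hz; exists g.
  by exists (mxtuple1 R d).
have [f Hf] := choice H.
exists (fun z => if (z != 0) && (nc z * K <= 1/2) then f z else mxtuple1 R d).
split.
  move=> z; case: ifP => [/andP[_ hz]|_]; first by case: (Hf z hz).
  by split; [exact: inG1 | exact: act1].
split; first by rewrite eqxx.
move=> eps eps0.
set del := Num.min (1 / (2 * K)) (eps / (2 * K ^+ 2 + 1)).
have Kp : 0 < K by lra.
have dpos : 0 < del.
  rewrite lt_min; apply/andP; split; rewrite divr_gt0 //; first lra.
  by have := sqr_ge0 K; lra.
exists del; split => // z z0; rewrite nc_lt_C => zd i a b.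
rewrite nc_lt_C.
have zd1 : nc z < 1 / (2 * K) by move: zd; rewrite lt_min => /andP[].
have zd2 : nc z < eps / (2 * K ^+ 2 + 1) by move: zd; rewrite lt_min => /andP[].
have hz : nc z * K <= 1/2.
  have : nc z * (2 * K) < 1 by rewrite -ltr_pdivlMr // mulr_gt0.
  lra.
rewrite z0 hz /=.
have [_ hb] := Hf z hz.
have -> : (f z i a b - mxtuple1 R d i a b) / z - X i a b =
    (f z i a b - (1%:M + z *: X i) a b) / z.
  rewrite !mxE /mxtuple1; field; exact: z0.
rewrite ncM ncV.
have nz : 0 < nc z by rewrite lt_def nc_eq0 z0 nc_ge0.
rewrite ler_pdivrMr // in zd2 || idtac.
have hb' := hb i a b.
have : nc (f z i a b - (1%:M + z *: X i) a b) / nc z <= 2 * nc z * K ^+ 2.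
  rewrite ler_pdivrMr //; apply: le_trans hb' _; rewrite exprMn; lra.
move=> h; apply: le_lt_trans h _.
have h2 : nc z * (2 * K ^+ 2 + 1) < eps by rewrite -ltr_pdivlMr // ?addr_ge0 //; have := sqr_ge0 K; lra.
have := sqr_ge0 K; nra.
Qed.

End Mod_Q.
Import Mod_Q.

Local Open Scope ring_scope.

Lemma tangent_mono (R : realType) (N : nat) (d : 'I_N -> nat) (S T : mxtuple R d -> Prop) X :
  (forall g, S g -> T g) -> tangent_at_1 S X -> tangent_at_1 T X.
Proof. by move=> ST [g [Sg H]]; exists g; split => // z; apply/ST/Sg. Qed.

Theorem mainTheorem3 (R : realType) (N : nat) (d : 'I_N -> nat)
    (hd : forall i : 'I_N, (2 <= d i)%N) (psi : tensor R d) :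
  semistable psi -> orbit_dim_vec psi = orbit_dim_ray psi.
Proof.
move=> Hs.
have E : tangent_at_1 (stab_ray psi) = tangent_at_1 (stab_vec psi).
  apply: funext => X; apply: propext; split.
    by move=> /(ray_props Hs) [h1 h2]; apply: vec_tangent.
  apply: tangent_mono => g [hG hg]; split => //; exists 1 => j.
  by rewrite hg mul1r.
by rewrite /orbit_dim_vec /orbit_dim_ray /subgroup_dim E.
Qed.
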